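(* Let $n$ be a positive integer. Then $\mathcal{L}_n \subseteq \mathcal{M}_n$. Moreover, every $\alpha \in \mathcal{L}_n$ can be realized as $\alpha = \mu_n(\xi,\xi')$ for some reals $\xi \neq \xi'$ for which the supremum defining $\mu_n(\xi,\xi')$ is attained at some $(s,t) \in \mathbb{Z}^2\setminus\{0\}$.
   Context: For an irrational real $\xi$ and positive integer $n$, $\lambda_n(\xi) = \limsup_{s/t \to \xi} \dfrac{\gcd(t,n)}{t^2 \left| \frac{s}{t} - \xi\right|}$ (limsup over rationals $s/t$, $t>0$, tending to $\xi$), and $\mathcal{L}_n = \{\lambda_n(\xi)\in\mathbb{R} : \xi\in\mathbb{R}\setminus\mathbb{Q}\}$. For reals $\xi\ne\xi'$, $\mu_n(\xi,\xi') = \sup_{(s,t)\in\mathbb{Z}^2\setminus\{0\}} \dfrac{\gcd(t,n)\,|\xi-\xi'|}{|s-t\xi|\,|s-t\xi'|}$ (with $\gcd(0,n)=n$), and $\mathcal{M}_n$ is the set of finite values of $\mu_n(\xi,\xi')$ over pairs of reals $\xi\neq\xi'$. *)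

(* Defs.v *)
From HB Require Import structures.
From mathcomp Require Import all_boot all_order all_algebra.
From mathcomp Require Import all_classical all_reals.
From mathcomp Require Import ereal.
From mathcomp Require Import Rstruct.
From Stdlib Require Import Rdefinitions.
Set Implicit Arguments. Unset Strict Implicit. Unset Printing Implicit Defensive.
Import Order.TTheory GRing.Theory Num.Theory.
Local Open Scope classical_set_scope.
Local Open Scope ring_scope.

Notation RR := Rdefinitions.R.

(* gcd(t, n) for an integer t; note gcdn 0 n = n, matching gcd(0,n)=n. *)
Definition gcdZ (t : int) (n : nat) : nat := gcdn (absz t) n.

Definition irrational (x : RR) : Prop := ~ exists q : rat, x = ratr q.

Definition lam_term (n : nat) (xi : RR) (s t : int) : RR :=
  (gcdZ t n)%:R / ((t%:~R) ^+ 2 * `|s%:~R / t%:~R - xi|).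

(* lambda_n(xi) = limsup_{s/t -> xi, t > 0} lam_term
               = inf_{delta > 0} sup { lam_term s t : t > 0, |s/t - xi| < delta },
   as an extended real. *)
Definition lambda_n (n : nat) (xi : RR) : \bar RR :=
  ereal_inf [set ereal_sup
                   [set y | exists s t : int,
                       [/\ 0 < t, `|s%:~R / t%:~R - xi| < d &
                           y = (lam_term n xi s t)%:E]]
            | d in [set d : RR | 0 < d]].

Definition L_set (n : nat) : set RR :=
  [set a | exists xi : RR, irrational xi /\ lambda_n n xi = a%:E].

Definition mu_term (n : nat) (xi xi' : RR) (s t : int) : \bar RR :=
  let den := `|s%:~R - t%:~R * xi| * `|s%:~R - t%:~R * xi'| in
  if den == 0 then +oo%E
  else ((gcdZ t n)%:R * `|xi - xi'| / den)%:E.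

Definition mu_n (n : nat) (xi xi' : RR) : \bar RR :=
  ereal_sup [set mu_term n xi xi' st.1 st.2
            | st in [set st : int * int | st != (0, 0)]].

Definition M_set (n : nat) : set RR :=
  [set a | exists xi xi' : RR, xi != xi' /\ mu_n n xi xi' = a%:E].

(* Main.v *)
Require Import Defs.
From HB Require Import structures.
From mathcomp Require Import all_boot all_order all_algebra.
From mathcomp Require Import all_classical all_reals.
From mathcomp Require Import ereal Rstruct.
From mathcomp Require Import topology normedtype sequences Rstruct_topology.
From mathcomp Require Import ring lra zify.
Set Implicit Arguments. Unset Strict Implicit. Unset Printing Implicit Defensive.
Import Order.TTheory GRing.Theory Num.Theory.
Import numFieldNormedType.Exports.
Local Open Scope classical_set_scope.
Local Open Scope ring_scope.
Lemma irr_nz (xi : RR) : Defs.irrational xi -> forall s t : int, t != 0 ->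
  s%:~R - t%:~R * xi != 0 :> RR.
Proof.
move=> hx s t t0; apply/negP => /eqP h; apply: hx.
exists (s%:~R / t%:~R); rewrite (fmorph_div (@ratr RR)) !(rmorph_int (@ratr RR)).
have t0' : (t%:~R : RR) != 0 by rewrite intr_eq0.
have -> : (s%:~R : RR) = t%:~R * xi by apply/eqP; rewrite -subr_eq0 h.
by rewrite mulrAC divff // mul1r.
Qed.

Lemma gcdZ_ge1 (t : int) (n : nat) : (0 < n)%N -> (1 <= gcdZ t n)%N.
Proof. by move=> hn; rewrite /gcdZ gcdn_gt0 hn orbT. Qed.

Lemma gcdZN (t : int) n : gcdZ (- t) n = gcdZ t n.
Proof. by rewrite /gcdZ abszN. Qed.

Lemma gcdZ_le (t : int) n : (0 < n)%N -> (gcdZ t n <= n)%N.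
Proof. by move=> hn; rewrite /gcdZ dvdn_leq // dvdn_gcdr. Qed.
Lemma dirichlet0 (xi : RR) (N : nat) :
  exists s t : int, [/\ t != 0, (`|t| <= N.+1)%N &
     N.+1%:R * `|s%:~R - t%:~R * xi| < 1 :> RR].
Proof.
pose fl (k : nat) := Num.floor (k%:R * xi).
pose fr (k : nat) := k%:R * xi - (fl k)%:~R.
have fr01 k : 0 <= fr k < 1.
  have := floor_le (k%:R * xi); have := floorD1_gt (k%:R * xi).
  rewrite /fr /fl intrD; move=> h1 h2; apply/andP; split; lra.
pose box k := Num.floor (N.+1%:R * fr k).
have box0 k : 0 <= box k.
  by rewrite floor_ge0 mulr_ge0 //; case/andP: (fr01 k).
have boxN k : box k < N.+1%:Z.
  rewrite floor_lt_int; case/andP: (fr01 k) => h1 h2.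
  have -> : ((N.+1%:Z)%:~R : RR) = N.+1%:R by [].
  by rewrite -[X in _ < X]mulr1 ltr_pM2l.
have absb k : (absz (box k) < N.+1)%N.
  by have := box0 k; have := boxN k; lia.
pose h (k : 'I_N.+2) : 'I_N.+1 := inord (absz (box k)).
have : ~ injective h by move/leq_card; rewrite !card_ord ltnn.
move=> /existsNP[k1 /existsNP[k2 /not_implyP[hk ne]]].
have eb : box k1 = box k2.
  have := congr1 val hk; rewrite /h /= !inordK ?absb // => e.
  have := box0 k1; have := box0 k2; lia.
have hfr : N.+1%:R * `|fr k1 - fr k2| < 1.
  have := floor_le (N.+1%:R * fr k1); have := floorD1_gt (N.+1%:R * fr k1).
  have := floor_le (N.+1%:R * fr k2); have := floorD1_gt (N.+1%:R * fr k2).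
  rewrite -/(box k1) -/(box k2) eb intrD => h1 h2 h3 h4.
  rewrite -[N.+1%:R]ger0_norm // -normrM mulrBr ltr_norml; apply/andP; split; lra.
exists (fl k2 - fl k1), ((k2 : nat)%:Z - (k1 : nat)%:Z); split.
- by rewrite subr_eq0; apply/negP => /eqP e; apply: ne; apply: val_inj => /=; lia.
- have := ltn_ord k1; have := ltn_ord k2; lia.
- suff -> : ((fl k2 - fl k1)%:~R - ((k2 : nat)%:Z - (k1 : nat)%:Z)%:~R * xi : RR)
     = fr k1 - fr k2 by [].
  rewrite /fr !intrD !intrN; rewrite -!/(_%:R); ring.
Qed.

Lemma dirichlet (xi : RR) (N : nat) :
  exists s t : int, [/\ 0 < t, t <= N.+1%:Z &
     N.+1%:R * `|s%:~R - t%:~R * xi| < 1 :> RR].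
Proof.
have [s [t [t0 tN h]]] := dirichlet0 xi N.
case: (ltrP 0 t) => tp.
  by exists s, t; split => //; lia.
exists (- s), (- t); split; first by lia.
  by lia.
rewrite !intrN mulNr opprK -normrN; congr (_ * `|_| < _): h; ring.
Qed.

Lemma lt_id (xi : RR) (s t : int) : t != 0 ->
  (t%:~R)^+2 * `|s%:~R / t%:~R - xi| = `|t%:~R| * `|s%:~R - t%:~R * xi| :> RR.
Proof.
move=> t0; have t0' : (t%:~R : RR) != 0 by rewrite intr_eq0.
rewrite (_ : s%:~R / t%:~R - xi = (s%:~R - t%:~R * xi) / t%:~R); last by field.
rewrite normrM normfV -(real_normK (num_real (t%:~R : RR))) expr2.
by field; rewrite normr_eq0.
Qed.

Lemma lam_termE n (xi : RR) (s t : int) : 0 < t ->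
  lam_term n xi s t = (gcdZ t n)%:R / (t%:~R * `|s%:~R - t%:~R * xi|).
Proof.
move=> t0; rewrite /lam_term RdivE RmultE lt_id; last by lia.
by rewrite [`|t%:~R|]gtr0_norm // ltr0z.
Qed.

Lemma lam_up (n : nat) xi a : lambda_n n xi = a%:E -> forall e : RR, 0 < e ->
  exists2 d : RR, 0 < d & forall s t : int, 0 < t ->
    `|s%:~R / t%:~R - xi| < d -> lam_term n xi s t <= a + e.
Proof.
move=> hl e e0.
have : (lambda_n n xi < (a + e)%:E)%E by rewrite hl lte_fin ltrDl.
rewrite /lambda_n => /ereal_inf_lt[y [d d0 <-]] hy.
exists d => // s t t0 hd.
apply/ltW; rewrite -lte_fin; apply: le_lt_trans hy; apply: ereal_sup_ubound.
by exists s, t.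
Qed.

Lemma lam_down (n : nat) xi a : lambda_n n xi = a%:E ->
  forall d e : RR, 0 < d -> 0 < e ->
  exists s t : int, [/\ 0 < t, `|s%:~R / t%:~R - xi| < d & a - e < lam_term n xi s t].
Proof.
move=> hl d e d0 e0.
pose Sd := [set y | exists s t : int,
                       [/\ 0 < t, `|s%:~R / t%:~R - xi| < d &
                           y = (lam_term n xi s t)%:E]].
have h : (a%:E <= ereal_sup Sd)%E.
  by rewrite -hl; apply: ereal_inf_lbound; exists d.
have : ((a - e)%:E < ereal_sup Sd)%E.
  by apply: lt_le_trans h; rewrite lte_fin gtrBl.
case/ereal_sup_gt => y [s [t [t0 hd ->]]]; rewrite lte_fin => hy.
by exists s, t.
Qed.

Lemma lam_ge1 (n : nat) xi a : (0 < n)%N -> Defs.irrational xi ->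
  lambda_n n xi = a%:E -> 1 <= a.
Proof.
move=> hn hx hl; rewrite -lee_fin -hl; apply: le_ereal_inf_tmp => y [d d0 <-].
pose N := Num.trunc (d^-1).
have hN : d^-1 < N.+1%:R by apply: truncnS_gt.
have [s [t [t0 tN h]]] := dirichlet xi N.
have nz := irr_nz hx s (lt0r_neq0 t0).
have tR : (1 : RR) <= t%:~R by rewrite ler1z; lia.
have tNR : (t%:~R : RR) <= N.+1%:R by rewrite -[N.+1%:R]/((N.+1%:Z)%:~R) ler_int.
have pos : 0 < `|s%:~R - t%:~R * xi| :> RR by rewrite normr_gt0.
have g1 : (1 : RR) <= (gcdZ t n)%:R by rewrite ler1n gcdZ_ge1.
apply: (@le_trans _ _ (lam_term n xi s t)%:E).
  rewrite lee_fin lam_termE // ler_pdivlMr; last by rewrite mulr_gt0 // ltr0z.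
  rewrite mul1r; apply: le_trans g1.
  have : N.+1%:R * `|s%:~R - t%:~R * xi| <= 1 :> RR by apply: ltW.
  have : 0 < N.+1%:R :> RR by [].
  nra.
apply: ereal_sup_ubound; exists s, t; split => //.
rewrite (_ : s%:~R / t%:~R - xi = (s%:~R - t%:~R * xi) / t%:~R); last first.
  by field; rewrite intr_eq0 lt0r_neq0.
rewrite normrM normfV [`|t%:~R|]gtr0_norm ?ltr0z //.
have dinv : d * d^-1 = 1 by rewrite divff // gt_eqF.
have h2 : d * d^-1 < d * N.+1%:R by rewrite ltr_pM2l.
have hM : (0 : RR) < N.+1%:R by [].
have hxd : `|s%:~R - t%:~R * xi| < d by nra.
rewrite ltr_pdivrMr ?ltr0z //.
apply: lt_le_trans hxd _; rewrite -{1}[d]mulr1 ler_pM2l //.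
Qed.

Lemma sep (xi : RR) : Defs.irrational xi -> forall K : nat,
  exists2 del : RR, 0 < del & forall s t : int, 0 < t -> t <= K%:Z ->
    del <= `|s%:~R - t%:~R * xi|.
Proof.
move=> hx; elim=> [|K [del del0 IH]].
  by exists 1 => // s t t0 tK; lia.
pose x : RR := K.+1%:R * xi.
pose f := Num.floor x.
have hf1 := floor_le x; have hf2 := floorD1_gt x.
have a0 : 0 < x - f%:~R.
  have := @irr_nz xi hx f (K.+1%:Z) isT.
  rewrite lt_def subr_ge0 hf1 andbT => h; rewrite -opprB oppr_eq0.
  by apply: contra h => /eqP ->.
have b0 : 0 < (f + 1)%:~R - x by rewrite subr_gt0.
exists (Num.min del (Num.min (x - f%:~R) ((f + 1)%:~R - x))).
  by rewrite !lt_min del0 a0 b0.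
move=> s t t0 tK.
have [tK'|tK'] : t <= K%:Z \/ t = K.+1%:Z by lia.
  by rewrite ge_min (IH s t t0 tK').
subst t; rewrite !ge_min; apply/orP; right; apply/orP.
have -> : ((K.+1%:Z)%:~R : RR) * xi = x by [].
case: (lerP s f) => hs.
  left; rewrite -normrN opprB; apply: le_trans (ler_norm _).
  by rewrite lerD2l lerN2 ler_int.
right; apply: le_trans (ler_norm _); rewrite lerD2r ler_int; lia.
Qed.
Lemma reduce (s0 t0 : int) : 0 < t0 -> exists s t g : int,
  [/\ 0 < g, 0 < t, s0 = s * g, t0 = t * g & exists u v : int, u * s + v * t = 1].
Proof.
move=> t0p.
pose g : int := gcdz s0 t0.
have hs : s0 = (s0 %/ g)%Z * g by rewrite divzK // dvdz_gcdl.
have ht : t0 = (t0 %/ g)%Z * g by rewrite divzK // dvdz_gcdr.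
have g0 : 0 < g.
  rewrite /g /gcdz ltz_nat gcdn_gt0; apply/orP; right; lia.
have tp : 0 < (t0 %/ g)%Z by move: t0p; rewrite {1}ht pmulr_lgt0.
exists (s0 %/ g)%Z, (t0 %/ g)%Z, g; split => //.
have h1 : gcdz (s0 %/ g)%Z (t0 %/ g)%Z = 1.
  have := mulz_gcdl (s0 %/ g)%Z (t0 %/ g)%Z g.
  rewrite -hs -ht -/g gtz0_abs // => h.
  by apply: (mulIf (lt0r_neq0 g0)); rewrite mul1r h.
have [u [v huv]] := Bezoutz (s0 %/ g)%Z (t0 %/ g)%Z.
by exists u, v; rewrite huv h1.
Qed.

Lemma gcdZM_le (t g : int) n : (0 < n)%N -> 0 < g -> (gcdZ (t * g) n <= `|g| * gcdZ t n)%N.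
Proof.
move=> hn g0; rewrite /gcdZ abszM.
have hg : (0 < `|g|)%N by lia.
apply: dvdn_leq; first by rewrite muln_gt0 hg /= gcdn_gt0 hn orbT.
rewrite [(`|g| * _)%N]mulnC muln_gcdl dvdn_gcd dvdn_gcdl /=.
by apply: dvdn_trans (dvdn_gcdr _ _) (dvdn_mulr _ _).
Qed.

Lemma stepB n xi a : (0 < n)%N -> Defs.irrational xi -> lambda_n n xi = a%:E ->
  forall k : nat, exists s b t d : int,
  [/\ k%:Z < t, s * d - b * t = 1, 0 <= d < t,
      (gcdZ t n)%:R <= (a + 1) * (t%:~R * `|s%:~R - t%:~R * xi|)
    & (a - k.+2%:R^-1) * (t%:~R * `|s%:~R - t%:~R * xi|) < (gcdZ t n)%:R ].
Proof.
move=> hn hx hl k.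
have a1 := lam_ge1 hn hx hl.
have [d1 d10 hd1] := lam_up hl (ltr01 : (0 : RR) < 1).
have [d2 d20 hd2] := sep hx k.
pose d := Num.min d1 (d2 / k.+1%:R).
have d0 : 0 < d by rewrite lt_min d10 divr_gt0.
have dd1 : d <= d1 by rewrite ge_min lexx.
have dd2 : d * k.+1%:R <= d2 by rewrite -ler_pdivlMr // ge_min lexx orbT.
have e0 : 0 < k.+2%:R^-1 :> RR by rewrite invr_gt0.
have e1 : k.+2%:R^-1 <= 1 :> RR by rewrite invf_le1 // ler1n.
have [s0 [t0 [t0p hd h0]]] := lam_down hl d0 e0.
have [s [t [g [g0 tp es et [u [v huv]]]]]] := reduce s0 t0p.
have gR : (g%:~R : RR) != 0 by rewrite intr_eq0 lt0r_neq0.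
have tR : (t%:~R : RR) != 0 by rewrite intr_eq0 lt0r_neq0.
have tRp : (0 : RR) < t%:~R by rewrite ltr0z.
have gRp : (0 : RR) < g%:~R by rewrite ltr0z.
have hst : (s0%:~R / t0%:~R : RR) = s%:~R / t%:~R.
  by rewrite es et !intrM; field; apply/andP; split.
rewrite hst in hd.
have eqA : `|s%:~R - t%:~R * xi| = t%:~R * `|s%:~R / t%:~R - xi| :> RR.
  have -> : s%:~R - t%:~R * xi = t%:~R * (s%:~R / t%:~R - xi) :> RR by field.
  by rewrite normrM gtr0_norm.
have nz := irr_nz hx s (lt0r_neq0 tp).
have Xp : 0 < `|s%:~R - t%:~R * xi| :> RR by rewrite normr_gt0.
have htk : k%:Z < t.
  rewrite ltNge; apply/negP => tk.
  have h1 := hd2 s t tp tk.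
  have tk' : (t%:~R : RR) <= k%:R by rewrite -[k%:R]/((k%:Z)%:~R) ler_int.
  have hA : 0 <= `|s%:~R / t%:~R - xi| :> RR by [].
  have : (k.+1%:R : RR) = k%:R + 1 by rewrite -addn1 natrD.
  nra.
have l1 := hd1 s t tp (lt_le_trans hd dd1).
rewrite lam_termE // ler_pdivrMr ?mulr_gt0 // in l1.
exists s, (- (v + (u %/ t)%Z * s)), t, (u %% t)%Z; split => //.
- have hm : (u %% t)%Z = u - (u %/ t)%Z * t by rewrite {2}(divz_eq u t); ring.
  by rewrite hm -huv; ring.
- by rewrite modz_ge0 ?lt0r_neq0 //= ltz_pmod.
- move: h0; rewrite lam_termE // ltr_pdivlMr; last first.
    by rewrite mulr_gt0 ?ltr0z // normr_gt0 irr_nz // lt0r_neq0.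
  have eX0 : t0%:~R * `|s0%:~R - t0%:~R * xi| =
      g%:~R * g%:~R * (t%:~R * `|s%:~R - t%:~R * xi|) :> RR.
    rewrite es et !intrM (_ : s%:~R * g%:~R - t%:~R * g%:~R * xi =
         g%:~R * (s%:~R - t%:~R * xi)); last by ring.
    by rewrite normrM [`|g%:~R|]gtr0_norm //; ring.
  have hg : ((gcdZ t0 n)%:R : RR) <= g%:~R * (gcdZ t n)%:R.
    have -> : (g%:~R : RR) = (`|g|%N)%:R by rewrite natr_absz gtr0_norm.
    rewrite et -natrM ler_nat.
    exact: gcdZM_le.
  rewrite eX0 => H.
  set X := t%:~R * _ in H *; set G := (gcdZ t n)%:R in hg *.
  have ae : 0 <= a - k.+2%:R^-1 by rewrite subr_ge0; apply: le_trans a1.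
  have X0 : 0 <= X by rewrite /X mulr_ge0 // ltW.
  have g1 : (1 : RR) <= g%:~R by rewrite ler1z.
  have H1 : (a - k.+2%:R^-1) * X * g%:~R * g%:~R < G * g%:~R.
    apply: lt_le_trans (_ : _ < (gcdZ t0 n)%:R) _; last by rewrite mulrC.
    set c := a - _; set gg := g%:~R.
    by have -> : c * X * gg * gg = c * (gg * gg * X) by ring.
  rewrite ltr_pM2r // in H1.
  apply: le_lt_trans H1; apply: ler_peMr => //; exact: mulr_ge0.
Qed.

Local Open Scope ring_scope.
Lemma near_oo (P : nat -> Prop) :
  (\forall n \near \oo, P n) <-> exists N, forall n, (N <= n)%N -> P n.
Proof.
split=> [[N _ h]|[N h]]; first by exists N => n hn; apply: h.
by exists N => // n /= hn; apply: h.
Qed.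

Lemma incr_ge (f : nat -> nat) : increasing_seq f -> forall j, (j <= f j)%N.
Proof.
move=> hf; elim=> [|j IH] //.
have : (f j < f j.+1)%N.
  rewrite ltnNge; apply/negP => h.
  have h' := hf j.+1 j.
  change ((f j.+1 <= f j)%N = (j.+1 <= j)%N) in h'.
  by move: h; rewrite h' ltnn.
lia.
Qed.

Lemma incr_comp (f g : nat -> nat) : increasing_seq f -> increasing_seq g ->
  increasing_seq (f \o g).
Proof.
move=> hf hg m n /=; rewrite (hf (g m) (g n)); exact: hg.
Qed.

Section Gen.
Variable R : realType.

Definition epscvg (u : nat -> R) (l : R) :=
  forall e, 0 < e -> exists N, forall j, (N <= j)%N -> `|u j - l| < e.

Lemma epscvgP (u : nat -> R) l : epscvg u l <-> u n @[n --> \oo] --> l.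
Proof.
split => h.
  apply/cvgrPdist_lt => e e0; apply: (iffRL (near_oo (fun n => `|l - u n| < e))).
  by have [N hN] := h e e0; exists N => j /hN; rewrite distrC.
move=> e e0; have [N hN] := iffLR (near_oo (fun n => `|l - u n| < e)) ((iffLR (cvgrPdist_lt _ _) h) e e0).
by exists N => j /hN; rewrite distrC.
Qed.

Lemma bw (u : nat -> R) (M : R) : (forall j, `|u j| <= M) ->
  exists f : nat -> nat, increasing_seq f /\ exists l, epscvg (u \o f) l.
Proof.
move=> hM.
have hb : bounded_fun u.
  exists M; split; first by rewrite num_real.
  by move=> M' hM' x _; apply: le_trans (hM x) (ltW hM').
have [f hf hc] := bolzano_weierstrass hb.
exists f; split => //; exists (limn (u \o f)); apply/epscvgP.
exact: hc.
Qed.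

Lemma lim_ineq (p q : nat -> R) (P Q G c x y : R) (N : nat) :
  epscvg p P -> epscvg q Q ->
  (forall j, (N <= j)%N -> G * `|q j| <= c * (`|x - y * (p j + q j)| * `|x - y * p j|)) ->
  G * `|Q| <= c * (`|x - y * (P + Q)| * `|x - y * P|).
Proof.
move=> /epscvgP hp /epscvgP hq hN.
apply: (@ler_cvg_to nat \oo _ R (fun j => G * `|q j|)
                   (fun j => c * (`|x - y * (p j + q j)| * `|x - y * p j|)) _ _).
- by apply: cvgM; [exact: cvg_cst | exact: cvg_norm].
- apply: cvgM; first exact: cvg_cst.
  apply: cvgM; apply: cvg_norm; apply: cvgB; try exact: cvg_cst;
    apply: cvgM; try exact: cvg_cst; try exact: hp; exact: cvgD.
- by apply: (iffRL (near_oo _)); exists N.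
Qed.

Lemma lim_ge (q : nat -> R) (Q G c : R) (N : nat) :
  epscvg q Q -> (forall j, (N <= j)%N -> c <= G * `|q j|) -> c <= G * `|Q|.
Proof.
move=> /epscvgP hq hN.
apply: (@ler_cvg_to nat \oo _ R (fun j => c) (fun j => G * `|q j|) _ _).
- exact: cvg_cst.
- by apply: cvgM; [exact: cvg_cst | exact: cvg_norm].
- by apply: (iffRL (near_oo _)); exists N.
Qed.

End Gen.
Definition epf (t d : int) : RR := - d%:~R / t%:~R.
Definition def (xi : RR) (s t : int) : RR := (t%:~R * (s%:~R - t%:~R * xi))^-1.

Lemma ident (xi : RR) (s b t d x y : int) : 0 < t -> s * d - b * t = 1 ->
  s%:~R - t%:~R * xi != 0 ->
  x%:~R - y%:~R * epf t d = (t * x + d * y)%:~R / t%:~R /\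
  x%:~R - y%:~R * (epf t d + def xi s t) =
    ((s * x + b * y)%:~R - (t * x + d * y)%:~R * xi) / (s%:~R - t%:~R * xi).
Proof.
move=> tp hdet nz.
have tR : (t%:~R : RR) != 0 by rewrite intr_eq0 lt0r_neq0.
have hdetR : s%:~R * d%:~R - b%:~R * t%:~R = 1 :> RR.
  by rewrite -!intrM -intrB hdet.
split; first by rewrite /epf !intrD !intrM; field.
have -> : def xi s t = (s%:~R * d%:~R - b%:~R * t%:~R) / (t%:~R * (s%:~R - t%:~R * xi)).
  by rewrite hdetR div1r.
rewrite /epf !intrD !intrM; field.
by rewrite nz tR.
Qed.

Lemma keyk n xi a e del (s b t d x y : int) :
  (forall S T : int, T != 0 -> `|S%:~R / T%:~R - xi| < del ->
      (gcdZ T n)%:R <= (a + e) * (`|T%:~R| * `|S%:~R - T%:~R * xi|)) ->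
  0 < t -> s * d - b * t = 1 -> s%:~R - t%:~R * xi != 0 ->
  t * x + d * y != 0 ->
  `|(s * x + b * y)%:~R - (t * x + d * y)%:~R * xi| < del ->
  (gcdZ (t * x + d * y) n)%:R * `|def xi s t|
     <= (a + e) * (`|x%:~R - y%:~R * (epf t d + def xi s t)| * `|x%:~R - y%:~R * epf t d|).
Proof.
move=> hdel tp hdet nz Tnz hS.
have [i1 i2] := ident x y tp hdet nz.
rewrite i1 i2.
set S' := s * x + b * y in hS *; set T' := t * x + d * y in Tnz hS *.
have TR : (T'%:~R : RR) != 0 by rewrite intr_eq0.
have T1 : (1 : RR) <= `|T'%:~R| by rewrite -intr_norm ler1z -gtz0_ge1 normr_gt0.
have hq : `|S'%:~R / T'%:~R - xi| < del.
  rewrite (_ : S'%:~R / T'%:~R - xi = (S'%:~R - T'%:~R * xi) / T'%:~R); last by field.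
  rewrite normrM normfV; apply: le_lt_trans hS.
  rewrite ler_pdivrMr ?(lt_le_trans ltr01 T1) //.
  by apply: ler_peMr.
have h := hdel S' T' Tnz hq.
have tR : (t%:~R : RR) != 0 by rewrite intr_eq0 lt0r_neq0.
have W0 : 0 < `|t%:~R| * `|s%:~R - t%:~R * xi| :> RR.
  by rewrite mulr_gt0 // normr_gt0.
have -> : `|def xi s t| = (`|t%:~R| * `|s%:~R - t%:~R * xi|)^-1.
  by rewrite /def normfV normrM.
rewrite !normrM !normfV.
have -> : (a + e) * (`|S'%:~R - T'%:~R * xi| / `|s%:~R - t%:~R * xi| *
      (`|T'%:~R| / `|t%:~R|)) =
    ((a + e) * (`|T'%:~R| * `|S'%:~R - T'%:~R * xi|)) /
      (`|t%:~R| * `|s%:~R - t%:~R * xi|).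
  by field; rewrite !normr_eq0 tR nz.
by rewrite ler_pM2r // invr_gt0.
Qed.

Lemma tnz (s b t d x y : int) : 0 < t -> s * d - b * t = 1 ->
  (x, y) != (0, 0) -> `|y| < t -> t * x + d * y != 0.
Proof.
move=> tp hdet hxy hy; apply/negP => /eqP h.
have ey : y = - t * (s * x + b * y).
  transitivity (y * (s * d - b * t)); first by rewrite hdet mulr1.
  transitivity (s * (t * x + d * y) - t * (s * x + b * y)); first by ring.
  by rewrite h mulr0 sub0r mulNr.
have hs : s * x + b * y != 0.
  apply/negP => /eqP h0; move: ey; rewrite h0 mulr0 => y0.
  move: h; rewrite y0 mulr0 addr0 => /eqP; rewrite mulf_eq0 (negbTE (lt0r_neq0 tp)) /= => /eqP x0.
  by move: hxy; rewrite x0 y0 eqxx.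
move: hy; rewrite ey normrM normrN (gtr0_norm tp) -[X in _ < X]mulr1 ltr_pM2l // => h1.
have : 0 < `|s * x + b * y| by rewrite normr_gt0.
by rewrite gtz0_ge1 => h2; move: (lt_le_trans h1 h2); rewrite ltxx.
Qed.
Lemma pair_neq0 (x y : int) : (x, y) != (0, 0) <-> ~ (x = 0 /\ y = 0).
Proof.
split.
  by move=> h [hx hy]; move: h; rewrite hx hy eqxx.
by move=> h; apply/negP => /eqP [hx hy]; apply: h.
Qed.

Lemma final n (A B C D : int) (eta eta' a : RR) :
  (0 < n)%N -> A * D - B * C = 1 -> eta != eta' ->
  (forall x y : int, (x, y) != (0, 0) ->
     (gcdZ (C * x + D * y) n)%:R * `|eta - eta'|
       <= a * (`|x%:~R - y%:~R * eta| * `|x%:~R - y%:~R * eta'|)) ->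
  (gcdZ C n)%:R * `|eta - eta'| = a ->
  exists xi xi' : RR, [/\ xi != xi', mu_n n xi xi' = a%:E &
    exists s t : int, (s, t) != (0, 0) /\ mu_term n xi xi' s t = a%:E].
Proof.
move=> hn hdet hne hE1 heq.
have hd : 0 < `|eta - eta'| by rewrite normr_gt0 subr_eq0.
have g1 : forall t : int, (1 : RR) <= (gcdZ t n)%:R.
  by move=> t; rewrite ler1n /gcdZ gcdn_gt0 hn orbT.
have nz : forall x y : int, (x, y) != (0, 0) ->
    x%:~R - y%:~R * eta != 0 /\ x%:~R - y%:~R * eta' != 0.
  move=> x y hxy; have h := hE1 x y hxy.
  have hp : 0 < (gcdZ (C * x + D * y) n)%:R * `|eta - eta'| :> RR.
    by rewrite mulr_gt0 // (lt_le_trans ltr01 (g1 _)).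
  split; apply/negP => /eqP h0; move: (lt_le_trans hp h);
    by rewrite h0 normr0 ?mul0r ?mulr0 ltxx.
have dC : (D, - C) != (0, 0).
  apply/pair_neq0 => -[hD hC]; move: hdet.
  by rewrite hD (_ : C = 0) ?mulr0 ?subr0 //; apply/eqP; rewrite -oppr_eq0 hC.
have [cz cz'] := nz _ _ dC.
rewrite !intrN !mulNr !opprK addrC in cz; rewrite !intrN !mulNr !opprK addrC in cz'.
set Cr := C%:~R in cz cz'; set Dr := D%:~R in cz cz'.
have hdetR : A%:~R * Dr - B%:~R * Cr = 1 :> RR.
  by rewrite /Cr /Dr -!intrM -intrB hdet.
pose z := (A%:~R * eta + B%:~R) / (Cr * eta + Dr).
pose z' := (A%:~R * eta' + B%:~R) / (Cr * eta' + Dr).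
have ezz : z - z' = (eta - eta') / ((Cr * eta + Dr) * (Cr * eta' + Dr)).
  have -> : z - z' = (A%:~R * Dr - B%:~R * Cr) * (eta - eta') /
             ((Cr * eta + Dr) * (Cr * eta' + Dr)).
    by rewrite /z /z'; field; apply/andP; split; [exact: cz' | exact: cz].
  by rewrite hdetR mul1r.
have zne : z != z'.
  rewrite -subr_eq0 ezz mulf_eq0 negb_or subr_eq0 hne /= invr_eq0 mulf_eq0.
  by rewrite negb_or cz cz'.
have hq : forall p q : int, C * (D * p - B * q) + D * (A * q - C * p) = q.
  move=> p q; transitivity (q * (A * D - B * C)); first by ring.
  by rewrite hdet mulr1.
have hxy : forall p q : int, (p, q) != (0, 0) ->
    (D * p - B * q, A * q - C * p) != (0, 0).
  move=> p q hpq.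
  apply/pair_neq0 => -[h1 h2]; move/pair_neq0: hpq; apply.
  split.
    transitivity (A * (D * p - B * q) + B * (A * q - C * p)).
      by transitivity (p * (A * D - B * C)); [rewrite hdet mulr1 | ring].
    by rewrite h1 h2 !mulr0 addr0.
  by rewrite -(hq p q) h1 h2 !mulr0 addr0.
have key : forall p q : int, (p, q) != (0, 0) ->
      mu_term n z z' p q = ((gcdZ q n)%:R * `|eta - eta'| /
          (`|(D * p - B * q)%:~R - (A * q - C * p)%:~R * eta| *
           `|(D * p - B * q)%:~R - (A * q - C * p)%:~R * eta'|))%:E.
  move=> p q hpq.
  have [n1 n2] := nz _ _ (hxy p q hpq).
  set X := (D * p - B * q)%:~R - (A * q - C * p)%:~R * eta in n1 *.
  set X' := (D * p - B * q)%:~R - (A * q - C * p)%:~R * eta' in n2 *.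
  have e1 : p%:~R - q%:~R * z = X / (Cr * eta + Dr).
    rewrite /X /z /Cr /Dr !intrB !intrM; field; exact: cz.
  have e2 : p%:~R - q%:~R * z' = X' / (Cr * eta' + Dr).
    rewrite /X' /z' /Cr /Dr !intrB !intrM; field; exact: cz'.
  rewrite /mu_term e1 e2 ezz.
  have hden : `|X / (Cr * eta + Dr)| * `|X' / (Cr * eta' + Dr)| != 0.
    by rewrite mulf_eq0 !normr_eq0 !mulf_eq0 !invr_eq0 !negb_or n1 n2 cz cz'.
  rewrite (negbTE hden); congr (_%:E).
  rewrite !normrM !normfV normrM; field.
  by rewrite !normr_eq0 n1 n2 cz cz'.
have hAC : (A, C) != (0, 0).
  apply/pair_neq0 => -[hA hC]; move: hdet; rewrite hA hC !mul0r mulr0 subr0.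
  by move/eqP; rewrite eq_sym oner_eq0.
have hval : mu_term n z z' A C = a%:E.
  rewrite key // (_ : D * A - B * C = 1); last by rewrite mulrC hdet.
  rewrite (_ : A * C - C * A = 0); last by rewrite mulrC subrr.
  rewrite (_ : (0:int)%:~R = 0 :> RR) // (_ : (1:int)%:~R = 1 :> RR) //.
  by rewrite !mul0r !subr0 normr1 mulr1 divr1 heq.
exists z, z'; split => //; last by exists A, C.
apply/le_anti/andP; split; last by rewrite -hval; apply: ereal_sup_ubound; exists (A, C).
apply: ge_ereal_sup => _ [[p q] /= hpq <-].
rewrite key //.
have [n1 n2] := nz _ _ (hxy p q hpq).
rewrite lee_fin ler_pdivrMr; last by rewrite mulr_gt0 // normr_gt0.
by rewrite -{1}(hq p q); apply: hE1; apply: hxy.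
Qed.

Lemma lam_up2 (n : nat) xi a : Defs.irrational xi -> lambda_n n xi = a%:E ->
  forall e : RR, 0 < e -> exists2 del : RR, 0 < del &
  forall S T : int, T != 0 -> `|S%:~R / T%:~R - xi| < del ->
      (gcdZ T n)%:R <= (a + e) * (`|T%:~R| * `|S%:~R - T%:~R * xi|).
Proof.
move=> hx hl e e0; have [del del0 h] := lam_up hl e0.
exists del => // S T Tnz hS.
have gen : forall S T : int, 0 < T -> `|S%:~R / T%:~R - xi| < del ->
    (gcdZ T n)%:R <= (a + e) * (`|T%:~R| * `|S%:~R - T%:~R * xi|).
  move=> S0 T0 Tp hS0; have := h S0 T0 Tp hS0.
  rewrite lam_termE // ler_pdivrMr; last first.
    by rewrite mulr_gt0 ?ltr0z // normr_gt0 irr_nz // lt0r_neq0.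
  by rewrite [`|T0%:~R|]gtr0_norm // ltr0z.
case: (ltrP 0 T) => hT; first exact: gen.
have hT' : 0 < - T by rewrite oppr_gt0 lt_neqAle Tnz hT.
have hS' : `|(- S)%:~R / (- T)%:~R - xi| < del.
  by rewrite !intrN invrN mulrN mulNr opprK.
have := gen _ _ hT' hS'; rewrite gcdZN => H; apply: le_trans H _.
rewrite !intrN normrN (_ : - S%:~R - - T%:~R * xi = - (S%:~R - T%:~R * xi)); last by ring.
by rewrite normrN.
Qed.

Lemma pigeon (c : nat -> nat * nat) (n : nat) :
  (forall k, ((c k).1 < n)%N /\ ((c k).2 < n)%N) ->
  exists f : nat -> nat, increasing_seq f /\ forall j, c (f j) = c (f 0).
Proof.
move=> hc.
have hfin : finite_set (range c).
  apply: (sub_finite_set _ (finite_setX (finite_II n) (finite_II n))).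
  by move=> _ [k _ <-]; split; apply (hc k).
have [x [A Ainf hA]] := finite_range_cst_subsequence hfin.
have [|f [finc _ fA]] := infinite_increasing_seq_wf _ Ainf 0.
  by move=> m; apply: sub_finite_set (finite_II m.+1) => y /=.
exists f; split => // j.
by rewrite (hA _).1 // (hA _).1.
Qed.

Lemma mod_lt (t : int) n : (0 < n)%N -> (`|(t %% n)%Z| < n)%N.
Proof.
move=> hn; have n0 : (n%:Z) != 0 by rewrite eqz_nat -lt0n.
have np : 0 < (n%:Z) by rewrite ltz_nat.
by rewrite -ltz_nat gez0_abs ?modz_ge0 // ltz_pmod.
Qed.

Lemma mod_eq (t C : int) n : (0 < n)%N ->
  `|(t %% n)%Z|%N = `|(C %% n)%Z|%N -> (t %% n)%Z = (C %% n)%Z.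
Proof.
move=> hn h; have n0 : (n%:Z) != 0 by rewrite eqz_nat -lt0n.
by have := congr1 Posz h; rewrite !gez0_abs ?modz_ge0.
Qed.

Lemma gcdZ_mod (t C : int) (n : nat) : (t %% n)%Z = (C %% n)%Z -> gcdZ t n = gcdZ C n.
Proof.
move=> h.
have e : forall u : int, (gcdZ u n)%:Z = gcdz u n by move=> u; rewrite /gcdZ /gcdz absz_nat.
apply/eqP; rewrite -eqz_nat e e -gcdz_modl h gcdz_modl.
by [].
Qed.

Lemma mod_lin (t d C D x y : int) (n : nat) :
  (t %% n)%Z = (C %% n)%Z -> (d %% n)%Z = (D %% n)%Z ->
  ((t * x + d * y) %% n)%Z = ((C * x + D * y) %% n)%Z.
Proof.
move=> ht hd.
by rewrite -modzDml -modzMml ht modzMml modzDml -modzDmr -modzMml hd modzMml modzDmr.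
Qed.

Definition good n (xi a : RR) (k : nat) (s b t d : int) : Prop :=
  [/\ k%:Z < t, s * d - b * t = 1, 0 <= d < t,
      (gcdZ t n)%:R <= (a + 1) * (t%:~R * `|s%:~R - t%:~R * xi|)
    & (a - k.+2%:R^-1) * (t%:~R * `|s%:~R - t%:~R * xi|) < (gcdZ t n)%:R ].

Lemma facts n xi a k s b t d : (0 < n)%N -> Defs.irrational xi -> 1 <= a ->
  good n xi a k s b t d ->
  [/\ 0 < t, s%:~R - t%:~R * xi != 0, `|epf t d| <= 1, `|def xi s t| <= a + 1 &
   [/\ t%:~R * `|s%:~R - t%:~R * xi| <= 2 * n%:R, k%:Z < t &
       a - k.+2%:R^-1 < (gcdZ t n)%:R * `|def xi s t| ] ].
Proof.
move=> hn hx a1 [kt hdet /andP[d0 dt] hup hlo].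
have tp : 0 < t by apply: le_lt_trans kt.
have nz := irr_nz hx s (lt0r_neq0 tp).
have tRp : (0 : RR) < t%:~R by rewrite ltr0z.
have W0 : 0 < t%:~R * `|s%:~R - t%:~R * xi| :> RR by rewrite mulr_gt0 // normr_gt0.
have edef : `|def xi s t| = (t%:~R * `|s%:~R - t%:~R * xi|)^-1.
  by rewrite /def normfV normrM [`|t%:~R|]gtr0_norm.
have g1 : (1 : RR) <= (gcdZ t n)%:R by rewrite ler1n gcdZ_ge1.
have gn : ((gcdZ t n)%:R : RR) <= n%:R by rewrite ler_nat gcdZ_le.
split => //.
- rewrite /epf normrM normrN normfV [`|t%:~R|]gtr0_norm // ger0_norm ?ler0z //.
  by rewrite ler_pdivrMr // mul1r ler_int ltW.
- rewrite edef -div1r ler_pdivrMr //; exact: le_trans g1 hup.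
split => //.
- have he : k.+2%:R^-1 <= 2^-1 :> RR by rewrite lef_pV2 ?posrE // ler_nat.
  set W := t%:~R * _ in W0 hlo *.
  move: he hlo; set e := k.+2%:R^-1 => he hlo.
  have h2 : 2^-1 * W <= (a - e) * W.
    by rewrite ler_wpM2r ?(ltW W0) //; lra.
  lra.
- by rewrite edef ltr_pdivlMr.
Qed.

Lemma helper_y (y t : int) (k : nat) : (`|y|%N < k)%N -> k%:Z < t -> `|y| < t.
Proof. move=> h1 h2; rewrite -abszE; lia. Qed.

Lemma helper_k (j k N : nat) (t : int) : (N <= j)%N -> (j <= k)%N -> k%:Z < t ->
  (N%:R : RR) < t%:~R.
Proof.
move=> h1 h2 h3; rewrite -[N%:R]/((N%:Z)%:~R) ltr_int; lia.
Qed.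

Lemma part2 (n : nat) (hn : (0 < n)%N) (a : RR) : L_set n a ->
  exists xi xi' : RR,
       [/\ xi != xi', mu_n n xi xi' = a%:E &
           exists s t : int, (s, t) != (0, 0) /\ mu_term n xi xi' s t = a%:E].
Proof.
case=> xi [hx hl].
have a1 := lam_ge1 hn hx hl.
have hB : forall k, exists q : int * int * int * int,
    good n xi a k q.1.1.1 q.1.1.2 q.1.2 q.2.
  by move=> k; have [s [b [t [d h]]]] := stepB hn hx hl k; exists (s, b, t, d).
have [Q hQ] := choice hB.
pose Sq k := (Q k).1.1.1; pose Bq k := (Q k).1.1.2.
pose Tq k := (Q k).1.2; pose Dq k := (Q k).2.
have F : forall k, _ := fun k => facts hn hx a1 (hQ k).
pose c k := (`|(Tq k %% n)%Z|%N, `|(Dq k %% n)%Z|%N).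
have [f0 [f0i f0c]] := @pigeon c n (fun k => conj (mod_lt _ hn) (mod_lt _ hn)).
pose K0 := f0 0.
pose A := Sq K0; pose Bb := Bq K0; pose C := Tq K0; pose Dd := Dq K0.
have resT : forall j, (Tq (f0 j) %% n)%Z = (C %% n)%Z.
  by move=> j; apply: (@mod_eq _ _ n hn); exact: (congr1 fst (f0c j)).
have resD : forall j, (Dq (f0 j) %% n)%Z = (Dd %% n)%Z.
  by move=> j; apply: (@mod_eq _ _ n hn); exact: (congr1 snd (f0c j)).
pose ep k := epf (Tq k) (Dq k); pose de k := def xi (Sq k) (Tq k).
have [f1 [f1i [L1 h1]]] := @bw _ (fun j => ep (f0 j)) 1
   (fun j => let: And5 _ _ h _ _ := F (f0 j) in h).
have [f2 [f2i [L2 h2]]] := @bw _ (fun j => de (f0 (f1 j))) (a + 1)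
   (fun j => let: And5 _ _ _ h _ := F (f0 (f1 j)) in h).
pose phi j := f0 (f1 (f2 j)).
have phige : forall j, (j <= phi j)%N.
  move=> j; apply: leq_trans (incr_ge f2i j) _.
  apply: leq_trans (incr_ge f1i _) _; exact: incr_ge f0i _.
have c1 : epscvg (fun j => ep (phi j)) L1.
  move=> e e0; have [N hN] := h1 e e0; exists N => j hj.
  exact: (hN (f2 j) (leq_trans hj (incr_ge f2i j))).
have c2 : epscvg (fun j => de (phi j)) L2 by [].
pose G := gcdZ C n.
have E1 : forall x y : int, (x, y) != (0, 0) ->
    (gcdZ (C * x + Dd * y) n)%:R * `|L2|
      <= a * (`|x%:~R - y%:~R * (L1 + L2)| * `|x%:~R - y%:~R * L1|).
  move=> x y hxy.
  set P := `|x%:~R - y%:~R * (L1 + L2)| * `|x%:~R - y%:~R * L1|.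
  have P0 : 0 <= P by rewrite /P mulr_ge0.
  suff H : forall e, 0 < e -> (gcdZ (C * x + Dd * y) n)%:R * `|L2| <= (a + e) * P.
    apply/ler_addgt0Pr => e e0.
    have P1 : 0 < P + 1 by rewrite ltr_wpDl.
    apply: le_trans (H (e / (P + 1)) (divr_gt0 e0 P1)) _.
    rewrite mulrDl lerD2l.
    rewrite mulrAC ler_pdivrMr // ler_wpM2l ?(ltW e0) //.
    by rewrite lerDl.
  move=> e e0.
  have [del del0 hdel] := lam_up2 hx hl e0.
  pose Kb : RR := `|x%:~R| + `|y%:~R| * (a + 2).
  pose N := maxn (`|y|%N.+1) (Num.trunc (2 * n%:R * Kb / del)).+1.
  apply: (lim_ineq (N := N) c1 c2) => j hj.
  have kN : (N <= phi j)%N := leq_trans hj (phige j).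
  set k := phi j in kN *.
  have [tp nz ep1 de1 [W2n kt gdl]] := F k.
  have [kt' hdet _ _ _] := hQ k.
  rewrite -/(Sq k) -/(Bq k) -/(Tq k) -/(Dq k) in tp nz ep1 de1 W2n kt gdl kt' hdet.
  have hy : `|y| < Tq k.
    apply: helper_y kt; apply: leq_trans kN; rewrite /N leq_max; by rewrite ltnSn.
  have Tnz := tnz tp hdet hxy hy.
  have [i1 i2] := ident x y tp hdet nz.
  have hS : `|(Sq k * x + Bq k * y)%:~R - (Tq k * x + Dq k * y)%:~R * xi| < del.
    have -> : (Sq k * x + Bq k * y)%:~R - (Tq k * x + Dq k * y)%:~R * xi =
        ((Sq k)%:~R - (Tq k)%:~R * xi) * (x%:~R - y%:~R * (epf (Tq k) (Dq k) + def xi (Sq k) (Tq k))).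
      by rewrite i2; field.
    rewrite normrM.
    have hK : `|x%:~R - y%:~R * (epf (Tq k) (Dq k) + def xi (Sq k) (Tq k))| <= Kb.
      apply: le_trans (ler_normB _ _) _; rewrite /Kb lerD2l normrM ler_wpM2l //.
      apply: le_trans (ler_normD _ _) _.
      by rewrite (_ : a + 2 = 1 + (a + 1)); [exact: lerD | ring].
    have tN : (N%:R : RR) < (Tq k)%:~R by apply: helper_k hj (phige j) kt.
    have tR : (0 : RR) < (Tq k)%:~R by rewrite ltr0z.
    have K0p : 0 <= Kb by rewrite /Kb addr_ge0 // mulr_ge0 // addr_ge0 // (le_trans ler01 a1).
    have N2 : 2 * n%:R * Kb / del < N%:R.
      apply: lt_le_trans (truncnS_gt _) _; rewrite ler_nat /N leq_max leqnn orbT //.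
    rewrite -(ltr_pM2l tR).
    apply: (@le_lt_trans _ _ (2 * n%:R * Kb)).
      rewrite mulrA; apply: ler_pM => //; first by rewrite mulr_ge0 // ltW.
    rewrite ltr_pdivrMr // in N2.
    apply: lt_le_trans N2 _; rewrite ler_pM2r //; exact: ltW.
  have := keyk hdel tp hdet nz Tnz hS.
  rewrite (gcdZ_mod (mod_lin x y (resT _) (resD _))).
  by [].
have Eq : (G%:R : RR) * `|L2| = a.
  apply/le_anti/andP; split.
    have := E1 1 0 isT; rewrite mulr1 mulr0 addr0 -/G.
    rewrite (_ : (0:int)%:~R = 0 :> RR) // (_ : (1:int)%:~R = 1 :> RR) //.
    by rewrite !mul0r !subr0 normr1 !mulr1.
  apply/ler_addgt0Pr => e e0; rewrite -lerBlDr.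
  apply: (lim_ge (N := (Num.trunc e^-1).+1) c2) => j hj.
  have kN : ((Num.trunc e^-1).+1 <= phi j)%N := leq_trans hj (phige j).
  set k := phi j in kN *.
  have [_ _ _ _ [_ _ gdl]] := F k.
  rewrite -/(Tq k) -/(Sq k) in gdl.
  rewrite (gcdZ_mod (resT (f1 (f2 j)))) -/G in gdl.
  apply: le_trans (ltW gdl); rewrite lerD2l lerN2.
  have hk : e^-1 < k.+2%:R.
    apply: lt_le_trans (truncnS_gt _) _; rewrite ler_nat; apply: leq_trans kN _.
    by rewrite ltnW.
  rewrite -(invrK e) lef_pV2 ?posrE ?invr_gt0 //; exact: ltW.
have L2nz : L2 != 0.
  apply/negP => /eqP h; move: Eq; rewrite h normr0 mulr0 => h0.
  by move: a1; rewrite -h0 ler10.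
have hdetK : A * Dd - Bb * C = 1.
  by have [_ h _ _ _] := hQ K0.
apply: (@final n A Bb C Dd (L1 + L2) L1 a hn hdetK).
- by rewrite -subr_eq0 addrAC subrr add0r.
- by move=> x y hxy; rewrite (_ : L1 + L2 - L1 = L2); [exact: E1 | ring].
- by rewrite (_ : L1 + L2 - L1 = L2); [exact: Eq | ring].
Qed.

Theorem proposition3p4 (n : nat) (hn : (0 < n)%N) :
  L_set n `<=` M_set n /\
  (forall a : RR, L_set n a ->
     exists xi xi' : RR,
       [/\ xi != xi', mu_n n xi xi' = a%:E &
           exists s t : int, (s, t) != (0, 0) /\ mu_term n xi xi' s t = a%:E]).
Proof.
split; last exact: part2.
move=> a /(part2 hn) [xi [xi' [h1 h2 _]]].
by exists xi, xi'.
Qed.
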